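(* Let $n\ge 2$. Then $$\max_{\pi}\ \min_{1\le i\le n-1}|\pi_{i+1}-\pi_i| = \lfloor n/2\rfloor,$$ where the maximum is over all permutations $\pi=(\pi_1,\ldots,\pi_n)$ of $\{1,\ldots,n\}$. *)

(* Defs.v *)
From mathcomp Require Import all_boot all_order all_fingroup.
Set Implicit Arguments. Unset Strict Implicit. Unset Printing Implicit Defensive.

(* Permutations of {1..n} are modelled as permutations of 'I_n = {0..n-1};
   shifting all values by 1 does not change differences. *)

Definition natdist (a b : nat) : nat := maxn a b - minn a b.

Definition perm_at n (s : {perm 'I_n}) (k : nat) : nat :=
  match insub k with Some j => val (s j) | None => 0 end.

(* min_{1 <= i <= n-1} |pi_{i+1} - pi_i|  (n used as neutral element; all gaps are < n) *)
Definition min_gap n (s : {perm 'I_n}) : nat :=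
  \big[minn/n]_(i < n.-1) natdist (perm_at s i.+1) (perm_at s i).

(* Main.v *)
Require Import Defs.
From mathcomp Require Import all_boot all_order all_fingroup.
From mathcomp Require Import zify.
Set Implicit Arguments. Unset Strict Implicit.

Lemma perm_atE n (s : {perm 'I_n}) k (h : k < n) : perm_at s k = val (s (Ordinal h)).
Proof. by rewrite /perm_at insubT. Qed.

Lemma halfP n : n./2 + n./2 <= n <= n./2 + n./2 + 1.
Proof. have := odd_double_half n; rewrite -addnn; case: (odd n) => /= <-; lia. Qed.

Lemma min_gap_le n (s : {perm 'I_n}) (i0 : 'I_n.-1) :
  min_gap s <= natdist (perm_at s i0.+1) (perm_at s i0).
Proof.
rewrite /min_gap.
have : i0 \in index_enum 'I_n.-1 by rewrite mem_index_enum.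
elim: (index_enum _) => [//|a r IH]; rewrite big_cons inE.
case/orP => [/eqP <-|/IH h]; first exact: geq_minl.
exact: leq_trans (geq_minr _ _) h.
Qed.

Lemma upper n (hn : 2 <= n) (s : {perm 'I_n}) : min_gap s <= n./2.
Proof.
have H := halfP n.
have hv : n./2 < n by lia.
set v : 'I_n := Ordinal hv.
set p := (s^-1)%g v.
have hp : s p = v by rewrite /p permKV.
have hpn := ltn_ord p.
case: (ltnP p.+1 n) => hp1.
- have h0 : (p : nat) < n.-1 by lia.
  apply: (leq_trans (min_gap_le s (Ordinal h0))) => /=.
  rewrite (perm_atE s hp1) (perm_atE s hpn).
  have -> : Ordinal hpn = p by apply: val_inj.
  rewrite hp /=.
  set w := val _. have : w < n by apply: ltn_ord.
  rewrite /natdist; lia.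
- have h0 : (p : nat).-1 < n.-1 by lia.
  apply: (leq_trans (min_gap_le s (Ordinal h0))) => /=.
  have e : (p.-1).+1 = p by lia.
  rewrite e (perm_atE s hpn).
  have -> : Ordinal hpn = p by apply: val_inj.
  have h2 : p.-1 < n by lia.
  rewrite hp (perm_atE s h2) /=.
  set w := val _. have : w < n by apply: ltn_ord.
  rewrite /natdist; lia.
Qed.

Definition g n (i : nat) := if odd i then i./2 else n./2 + i./2.

Lemma g_lt n (i : 'I_n) : g n i < n.
Proof.
have H := halfP n; have Hi := halfP i; have := ltn_ord i.
rewrite /g; case: (boolP (odd i)) => o.
- lia.
- have := odd_double_half i; rewrite -addnn (negbTE o) /=. lia.
Qed.

Definition f n (i : 'I_n) : 'I_n := Ordinal (g_lt i).

Lemma f_inj n : injective (@f n).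
Proof.
move=> i j /(congr1 val) /=; rewrite /g.
have Ei := odd_double_half i; have Ej := odd_double_half j.
rewrite -addnn in Ei Ej.
have H := halfP n; have hi := ltn_ord i; have hj := ltn_ord j.
move=> e; apply: val_inj => /=.
move: Ei Ej e; case: (odd i); case: (odd j) => /=; lia.
Qed.

Lemma lower n (hn : 2 <= n) : n./2 <= min_gap (perm (@f_inj n)).
Proof.
have H := halfP n.
rewrite /min_gap; apply: (big_ind (fun x => n./2 <= x)).
- lia.
- by move=> x y hx hy; rewrite leq_min hx hy.
move=> i _.
have h1 : i.+1 < n by have := ltn_ord i; lia.
have h0 : (i : nat) < n by lia.
rewrite (perm_atE _ h1) (perm_atE _ h0) !permE /= /g /=.
have Ei := odd_double_half i.
rewrite -addnn in Ei.
have := uphalf_half i. rewrite /= /uphalf.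
case: (odd i) Ei => /= Ei.
- rewrite /natdist; lia.
- rewrite /natdist; lia.
Qed.

Theorem theorem4p1 (n : nat) (hn : 2 <= n) :
  \max_(s : {perm 'I_n}) min_gap s = n./2.
Proof.
apply/eqP; rewrite eqn_leq; apply/andP; split.
- by apply/bigmax_leqP => s _; apply: upper.
- apply: leq_trans (lower hn) _.
  exact: (leq_bigmax_cond (perm (@f_inj n))).
Qed.
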